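(* There exist constants $c>0$ and $N$ such that every graph $G$ of order $n\ge N$ satisfies $$\mathrm{adim}(G)\ge \mathrm{bdim}(G)\ge c\log n.$$
   Context: $d(x,y)$ is the length of a shortest $x$–$y$ path, with $d(x,y)=\infty$ if $x,y$ lie in different components. For an integer $k\ge1$ let $d_k(x,y)=\min\{d(x,y),k+1\}$. A set $A\subseteq V(G)$ is an adjacency resolving set if for all distinct $x,y\in V(G)$ there is $z\in A$ with $d_1(x,z)\ne d_1(y,z)$. $\mathrm{adim}(G)$ is the minimum size of an adjacency resolving set. A function $f:V(G)\to\mathbb{Z}_{\ge 0}$ is a resolving broadcast of $G$ if for all distinct $x,y\in V(G)$ there is $z\in V(G)$ with $f(z)=i>0$ and $d_i(x,z)\ne d_i(y,z)$. The broadcast dimension $\mathrm{bdim}(G)$ is the minimum of $\sum_{v\in V(G)}f(v)$ over all resolving broadcasts $f$ of $G$. *)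

(* Defs.v *)
From mathcomp Require Import all_boot.
From mathcomp Require Import boolp.
Set Implicit Arguments. Unset Strict Implicit. Unset Printing Implicit Defensive.

Section Graphs.
Variable T : finType.

Definition simple_graph (e : rel T) : Prop := symmetric e /\ irreflexive e.

(* ball e m x = set of vertices joined to x by a walk of length <= m,
   i.e. {y | d(x,y) <= m}. *)
Fixpoint ball (e : rel T) (m : nat) (x : T) : {set T} :=
  match m with
  | 0 => [set x]
  | m'.+1 => ball e m' x :|: [set y | [exists z in ball e m' x, e z y]]
  end.

(* d_k(x,y) = min{d(x,y), k+1}: the least m <= k with d(x,y) <= m, or k+1 if
   there is none (in particular if x,y lie in different components). *)
Definition dk (e : rel T) (k : nat) (x y : T) : nat :=
  find (fun m => y \in ball e m x) (iota 0 k.+1).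

Definition adj_resolving (e : rel T) (A : {set T}) : Prop :=
  forall x y : T, x != y -> exists2 z, z \in A & dk e 1 x z != dk e 1 y z.

Definition resolving_broadcast (e : rel T) (f : T -> nat) : Prop :=
  forall x y : T, x != y ->
    exists z : T, 0 < f z /\ dk e (f z) x z != dk e (f z) y z.

Lemma dk1_sep (e : rel T) (x y : T) : x != y -> dk e 1 x x != dk e 1 y x.
Proof.
move=> nxy; rewrite /dk /= !in_set1 eqxx /=.
by rewrite eq_sym (negbTE nxy).
Qed.

Lemma adj_resolving_setT (e : rel T) : adj_resolving e [set: T].
Proof. by move=> x y nxy; exists x; [rewrite in_setT | exact: dk1_sep]. Qed.

Lemma resolving_broadcast_ones (e : rel T) :
  resolving_broadcast e (fun _ => 1).
Proof. by move=> x y nxy; exists x; split => //; exact: dk1_sep. Qed.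

Lemma adim_ex (e : rel T) :
  exists a, `[< exists A : {set T}, adj_resolving e A /\ #|A| = a >].
Proof. by exists #|[set: T]|; apply/asboolP; exists [set: T]; split=> //; exact: adj_resolving_setT. Qed.

Lemma bdim_ex (e : rel T) :
  exists b, `[< exists f : {ffun T -> nat},
                  resolving_broadcast e f /\ \sum_(v : T) f v = b >].
Proof.
exists (\sum_(v : T) [ffun _ : T => 1] v); apply/asboolP.
exists [ffun _ => 1]; split=> //.
move=> x y nxy; exists x; rewrite ffunE; split=> //; exact: dk1_sep.
Qed.

Definition adim (e : rel T) : nat := ex_minn (adim_ex e).

Definition bdim (e : rel T) : nat := ex_minn (bdim_ex e).

End Graphs.

(* Main.v *)
Require Import Defs.
From mathcomp Require Import all_boot.
From Stdlib Require Import Reals.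
From mathcomp Require Import zify boolp.
From Stdlib Require Import Lia Lra.

Lemma dk_le (T : finType) (e : rel T) k x y : dk e k x y <= k.+1.
Proof. by rewrite /dk; have := find_size (fun m => y \in ball e m x) (iota 0 k.+1); rewrite size_iota. Qed.

Lemma three_pow k : 0 < k -> k.+2 <= expn 3 k.
Proof.
elim: k => // k IH _; case: k IH => [|k] IH //.
rewrite expnS; have := IH isT; lia.
Qed.

Lemma card_bound (T : finType) (e : rel T) (f : T -> nat) :
  resolving_broadcast e f -> #|T| <= expn 3 (\sum_(v : T) f v).
Proof.
move=> rf.
pose g z := if 0 < f z then (f z).+1 else 0.
pose rT z := ordinal (g z).+1.
pose phi (x : T) : {dffun forall z : T, rT z} :=
  [ffun z => inord (dk e (f z) x z)].
have inj : injective phi.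
  move=> x y hxy; apply/eqP; apply/negPn/negP => nxy.
  have [z [fz hd]] := rf x y nxy.
  have := congr1 (fun h : {dffun forall z, rT z} => nat_of_ord (h z)) hxy; rewrite /phi !ffunE /=.
  have K : forall n a b, a < n.+1 -> b < n.+1 ->
      nat_of_ord (@inord n a) = nat_of_ord (@inord n b) -> a = b.
    by move=> n a b ha hb; rewrite !inordK.
  have hb : forall w, dk e (f z) w z < (g z).+1.
    move=> w; rewrite /g. by rewrite fz ltnS dk_le.
  move/(K _ _ _ (hb x) (hb y)) => E; move: hd; by rewrite E eqxx.
have := leq_card phi inj; rewrite card_dep_ffun foldrE big_map big_enum /=.
move/leq_trans; apply.
rewrite (big_morph (expn 3) (expnD 3) (expn0 3)).
apply: leq_prod => z _; rewrite card_ord /g.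
case: (posnP (f z)) => [->|fz] //; exact: three_pow.
Qed.
Lemma bdim_le_adim (T : finType) (e : rel T) : bdim e <= adim e.
Proof.
rewrite /adim; case: ex_minnP => a /asboolP [A [hA <-]] _.
rewrite /bdim; case: ex_minnP => b _ hmin; apply: hmin.
apply/asboolP; exists [ffun z => nat_of_bool (z \in A)]; split.
- move=> x y nxy; have [z zA hz] := hA x y nxy.
  by exists z; rewrite ffunE zA.
- rewrite (eq_bigr (fun z => nat_of_bool (z \in A))); last by move=> z _; rewrite ffunE.
  by rewrite -sum1_card [RHS]big_mkcond /=; apply: eq_bigr => i _; case: (i \in A).
Qed.

Lemma INR_expn3 b : INR (expn 3 b) = (3 ^ b)%R.
Proof.
elim: b => [|b IH]; first by rewrite expn0.
rewrite expnS mult_INR IH /=; congr (_ * _)%R; simpl; lra.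
Qed.

Lemma bdim_bound (T : finType) (e : rel T) : #|T| <= expn 3 (bdim e).
Proof.
rewrite /bdim; case: ex_minnP => b /asboolP [f [hf <-]] _.
exact: (@card_bound T e (fun v => f v) hf).
Qed.

Theorem theorem3p11 :
  exists c : R, Rlt 0 c /\
  exists N : nat, forall (T : finType) (e : rel T),
    simple_graph e -> N <= #|T| ->
    bdim e <= adim e /\ Rle (Rmult c (ln (INR #|T|))) (INR (bdim e)).
Proof.
have l3 : (0 < ln 3)%R by rewrite -ln_1; apply: ln_increasing; lra.
exists (/ ln 3)%R; split; first exact: Rinv_0_lt_compat.
exists 1%N => T e _ hn; split; first exact: bdim_le_adim.
have hb := @bdim_bound T e.
have h1 : (INR #|T| <= 3 ^ bdim e)%R.
  by have := le_INR _ _ (elimT leP hb); rewrite INR_expn3.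
have h0 : (0 < INR #|T|)%R by apply: lt_0_INR; apply/ltP.
have h2 : (ln (INR #|T|) <= INR (bdim e) * ln 3)%R.
  rewrite -ln_pow; last lra.
  case: (Rle_lt_or_eq_dec _ _ h1) => h; last by rewrite h; lra.
  by apply: Rlt_le; apply: ln_increasing.
apply (Rmult_le_reg_l (ln 3)) => //.
rewrite -Rmult_assoc Rinv_r; lra.
Qed.
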